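(* Let $\mathcal{A}$ be a BST mergesort algorithm which sorts the permutation $\pi$ of $\{1,\dots,n\}$ using $\mathcal{A}(\pi)$ accesses. Then $\mathrm{OPT}_{\mathrm{BST}}(\pi)\in O(\mathcal{A}(\pi))$.
   Context: BST model: the keys $\{1,\dots,n\}$ are stored in a BST; an access sequence is served in order, each search starting with a pointer at the root and at each step moving the pointer to the parent or a child, or rotating the current node with its parent, each at unit cost; the search must visit its key. $\mathrm{OPT}_{\mathrm{BST}}(\pi)$ is the minimum cost of an offline BST algorithm (knowing the whole sequence in advance) serving $\pi$ as an access sequence. A top tree of a binary tree $T$ is a connected set of nodes containing the root. BST merge: given BSTs $T_A,T_B$ with disjoint keys, for some top trees $\tau_a$ of $T_A$, $\tau_b$ of $T_B$, it returns a BST $T$ on the union of keys such that for some top tree $\tau$ of $T$, $\tau=\tau_a\cup\tau_b$, the subtrees of $T$ hanging off $\tau$ are unchanged subtrees of $T_A$ or $T_B$, and $\tau$ contains the block boundaries (in the sorted merged order, a block is a maximal contiguous run of keys from the same input; its boundaries are its first and last keys). Number of accesses: $|\tau|$. BST mergesort: on input of size 1 returns it; otherwise splits the input sequence into two contiguous parts each of size at least 1, recursively BST-mergesorts each, and BST-merges the results. Number of accesses: the sum of accesses over all merges. *)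

(* Defs.v *)
From mathcomp Require Import all_boot.
Set Implicit Arguments. Unset Strict Implicit. Unset Printing Implicit Defensive.

Inductive tree := Leaf | Node of tree & nat & tree.

Fixpoint inorder (t : tree) : seq nat :=
  if t is Node l k r then inorder l ++ k :: inorder r else [::].

Definition is_bst (t : tree) : bool := sorted ltn (inorder t).

(* A pointer position is a path from the root: false = left, true = right. *)
Fixpoint subtree (t : tree) (p : seq bool) : tree :=
  match p, t with
  | [::], _ => t
  | b :: p', Node l _ r => subtree (if b then r else l) p'
  | _ :: _, Leaf => Leaf
  end.

Fixpoint replace (t : tree) (p : seq bool) (s : tree) : tree :=
  match p with
  | [::] => s
  | b :: p' =>
      match t with
      | Leaf => Leaf
      | Node l k r => if b then Node l k (replace r p' s) else Node (replace l p' s) k r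
      end
  end.

Definition key_at (t : tree) (p : seq bool) : option nat :=
  if subtree t p is Node _ k _ then Some k else None.

Definition rotate (b : bool) (s : tree) : option tree :=
  match b, s with
  | false, Node (Node a x c) y d => Some (Node a x (Node c y d))
  | true, Node a y (Node c x d) => Some (Node (Node a y c) x d)
  | _, _ => None
  end.

(* One unit-cost operation of the BST model on (tree, pointer). *)
Definition step (st st' : tree * seq bool) : Prop :=
  let: (t, p) := st in let: (t', p') := st' in
  (exists q b, p = rcons q b /\ t' = t /\ p' = q) \/
  (exists b, p' = rcons p b /\ t' = t /\ key_at t p' <> None) \/
  (* rotate the current node with its parent *)
  (exists q b s, p = rcons q b /\ rotate b (subtree t q) = Some s /\
                 t' = replace t q s /\ p' = q).

Inductive reach : tree * seq bool -> nat -> tree * seq bool -> Prop :=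
| reach_refl st : reach st 0 st
| reach_step st st1 c st' : step st st1 -> reach st1 c st' -> reach st c.+1 st'.

Definition search (t : tree) (x : nat) (c : nat) (t' : tree) : Prop :=
  exists t1 p1 c1 p2 c2,
    reach (t, [::]) c1 (t1, p1) /\ key_at t1 p1 = Some x /\
    reach (t1, p1) c2 (t', p2) /\ c = c1 + c2.

Inductive serve : tree -> seq nat -> nat -> Prop :=
| serve_nil t : serve t [::] 0
| serve_cons t x xs c1 t1 c2 :
    search t x c1 t1 -> serve t1 xs c2 -> serve t (x :: xs) (c1 + c2).

(* OPT_BST(pi) <= b : some offline BST algorithm (choosing the initial BST on
   keys {1..n} and all operations) serves pi at cost at most b. *)
Definition OPT_BST_le (n : nat) (pi : seq nat) (b : nat) : Prop :=
  exists (t0 : tree) (cost : nat),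
    inorder t0 = iota 1 n /\ serve t0 pi cost /\ cost <= b.

(* The node set of a top tree of t is represented by a predicate P on keys
   (nodes are identified with their keys); its nodes are the keys of t in P. *)
Fixpoint topc (P : pred nat) (t : tree) : bool :=
  if t is Node l k r then
    (if P k then topc P l && topc P r else all (predC P) (inorder t))
  else true.

(* connected, contains the root *)
Definition is_top (P : pred nat) (t : tree) : bool :=
  (if t is Node _ k _ then P k else false) && topc P t.

Fixpoint hanging (P : pred nat) (t : tree) : seq tree :=
  if t is Node l k r then
    (if P k then hanging P l ++ hanging P r else [:: t])
  else [::].

Definition is_subtree_of (s t : tree) : Prop := exists p, subtree t p = s.

(* block boundaries of the merged sorted sequence s w.r.t. the key set A:
   first and last key, and both keys at every change of origin *)
Definition boundaries_in (P : pred nat) (A : seq nat) (s : seq nat) : bool :=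
  (if s is x :: _ then P x else true) && (if s is x :: _ then P (last x s) else true) &&
  all (fun xy => ((xy.1 \in A) != (xy.2 \in A)) ==> (P xy.1 && P xy.2))
      (zip s (behead s)).

Fixpoint In_seq (x : tree) (s : seq tree) : Prop :=
  if s is y :: s' then y = x \/ In_seq x s' else False.

Definition bst_merge (TA TB T : tree) (c : nat) : Prop :=
  exists (Pa Pb P : pred nat),
    [/\ is_bst T, perm_eq (inorder T) (inorder TA ++ inorder TB),
        is_top Pa TA /\ is_top Pb TB /\ is_top P T,
        (* tau = tau_a \cup tau_b as node sets *)
        {in inorder T, forall k,
            P k = ((k \in inorder TA) && Pa k) || ((k \in inorder TB) && Pb k)} /\
        (forall s, In_seq s (hanging P T) -> is_subtree_of s TA \/ is_subtree_of s TB) /\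
        boundaries_in P (inorder TA) (inorder T)
      & c = count P (inorder T)].

(* bst_mergesort s T a : some BST mergesort run on input sequence s returns T
   using a accesses (the run encodes all choices of splits and merges) *)
Inductive bst_mergesort : seq nat -> tree -> nat -> Prop :=
| ms_one x : bst_mergesort [:: x] (Node Leaf x Leaf) 0
| ms_split s1 s2 T1 T2 a1 a2 T a :
    s1 != [::] -> s2 != [::] ->
    bst_mergesort s1 T1 a1 -> bst_mergesort s2 T2 a2 ->
    bst_merge T1 T2 T a ->
    bst_mergesort (s1 ++ s2) T (a1 + a2 + a).

(* Main.v *)
Require Import Defs.
From mathcomp Require Import all_boot zify.
Set Implicit Arguments. Unset Strict Implicit. Unset Printing Implicit Defensive.


Ltac lia_c := repeat match goal with
  | H : is_true ?b |- _ => lazymatch b with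
       | leq _ _ => fail
       | negb (leq _ _) => fail
       | eq_op _ _ => fail
       | negb (eq_op _ _) => fail
       | _ => clear H end
  end; lia.

Lemma reach_trans a b c c1 c2 : reach a c1 b -> reach b c2 c -> reach a (c1 + c2) c.
Proof. elim=> [st|st st1 k st' Hs _ IH] H //=. by apply: reach_step Hs (IH H). Qed.

Lemma reach1 a b : step a b -> reach a 1 b.
Proof. move=> H; apply: reach_step H (reach_refl _). Qed.

Lemma subtree_nil t : subtree t [::] = t. Proof. by case: t. Qed.
Lemma replace_nil t s : replace t [::] s = s. Proof. by case: t. Qed.
Lemma subtree_leaf p : subtree Leaf p = Leaf. Proof. by case: p. Qed.

Lemma subtree_cat t p q : subtree t (p ++ q) = subtree (subtree t p) q.
Proof.
elim: p t => [|b p IH] [|l k r] /=; by destruct q || exact: IH.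
Qed.

Lemma subtree_rcons_ne t q b : subtree t (rcons q b) <> Leaf -> subtree t q <> Leaf.
Proof. by rewrite -cats1 subtree_cat => H E; apply: H; rewrite E. Qed.

Lemma subtree_replace t q s : subtree t q <> Leaf -> subtree (replace t q s) q = s.
Proof.
elim: q t => [|b q IH] [|l k r] H /=; rewrite ?subtree_nil //; try by case: H.
by case: b H => H /=; rewrite IH.
Qed.

Lemma replace_replace t q s s' : replace (replace t q s) q s' = replace t q s'.
Proof.
elim: q t => [|b q IH] [|l k r] /=; rewrite ?replace_nil //.
by case: b => /=; rewrite IH.
Qed.

Lemma replace_subtree t q : replace t q (subtree t q) = t.
Proof.
elim: q t => [|b q IH] [|l k r] /=; rewrite ?replace_nil ?subtree_nil //.
by case: b => /=; rewrite IH.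
Qed.

Lemma key_atE t p : (key_at t p <> None) <-> (subtree t p <> Leaf).
Proof. rewrite /key_at; by case: (subtree t p). Qed.

Definition okst (st : tree * seq bool) := subtree st.1 st.2 <> Leaf.

Lemma rotate_node b u s : rotate b u = Some s -> exists l k r, s = Node l k r.
Proof. by case: b; case: u => [|[|? ? ?] ? [|? ? ?]] //= [<-]; eauto. Qed.

Lemma step_ok st st' : step st st' -> okst st -> okst st'.
Proof.
case: st st' => t p [t' p']; rewrite /okst /=.
case=> [[q [b [-> [-> ->]]]]|[[b [-> [-> H]]]|[q [b [s [-> [Hr [-> ->]]]]]]]] /=.
- exact: subtree_rcons_ne.
- by move=> _; apply/key_atE.
- move=> Hok. have Hq := subtree_rcons_ne Hok.
  rewrite subtree_replace //. by case: (rotate_node Hr) => [l [k [r ->]]].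
Qed.

Lemma reach_ok st c st' : reach st c st' -> okst st -> okst st'.
Proof. elim=> // a b k d Hs _ IH H; apply: IH; exact: step_ok Hs H. Qed.

Lemma rotate_inv b u s : rotate b u = Some s -> rotate (~~ b) s = Some u.
Proof. by case: b; case: u => [|[|? ? ?] ? [|? ? ?]] //= [<-]. Qed.

Lemma rotate_child b u s : rotate b u = Some s -> subtree s [:: ~~ b] <> Leaf.
Proof. by case: b; case: u => [|[|? ? ?] ? [|? ? ?]] //= [<-]. Qed.

Lemma step_rev st st' : step st st' -> okst st -> exists2 c, c <= 3 & reach st' c st.
Proof.
case: st st' => t p [t' p'] /=.
case=> [[q [b [-> [-> ->]]]]|[[b [-> [-> H]]]|[q [b [s [-> [Hr [-> ->]]]]]]]] /= Hok.
- exists 1 => //; apply: reach1; right; left; exists b; split=> //; split=> //.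
  by apply/key_atE.
- exists 1 => //; apply: reach1; left; by exists p, b.
- have Hq := subtree_rcons_ne Hok.
  exists 3 => //.
  set t2 := replace t q s.
  have Hs : subtree t2 q = s by rewrite subtree_replace.
  apply: (@reach_step _ (t2, rcons q (~~ b))).
    right; left; exists (~~ b); split=> //; split=> //.
    apply/key_atE; rewrite -cats1 subtree_cat Hs; exact: rotate_child Hr.
  apply: (@reach_step _ (t, q)).
    right; right; exists q, (~~ b), (subtree t q); split=> //; split.
      by rewrite Hs; apply: rotate_inv.
    by rewrite /t2 replace_replace replace_subtree.
  apply: reach1; right; left; exists b; split=> //; split=> //.
  by apply/key_atE.
Qed.

Lemma reach_rev st c st' : reach st c st' -> okst st -> exists2 c', c' <= 3 * c & reach st' c' st.
Proof.
elim=> [a|a b k d Hs Hr IH] Hok; first by exists 0 => //; constructor.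
have [c1 Hc1 R1] := step_rev Hs Hok.
have [c2 Hc2 R2] := IH (step_ok Hs Hok).
exists (c2 + c1); last exact: reach_trans R2 R1.
lia_c.
Qed.


Lemma reach_map (f : tree * seq bool -> tree * seq bool) :
  (forall a b, step a b -> step (f a) (f b)) ->
  forall a c b, reach a c b -> reach (f a) c (f b).
Proof. move=> Hf a c b; elim=> [st|st st1 k st' Hs _ IH]; first by constructor.
exact: reach_step (Hf _ _ Hs) IH. Qed.

Lemma step_side (d : bool) l k r p r' p' :
  step (r, p) (r', p') ->
  step (if d then Node l k r else Node r k l, d :: p)
       (if d then Node l k r' else Node r' k l, d :: p').
Proof.
case=> [[q [b [-> [-> ->]]]]|[[b [-> [-> H]]]|[q [b [s [-> [Hr [-> ->]]]]]]]].
- left; exists (d :: q), b; by case: d.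
- right; left; exists b; split=> //; split=> //; by case: d.
- right; right; exists (d :: q), b, s; by case: d.
Qed.

Lemma reach_side (d : bool) l k r p c r' p' :
  reach (r, p) c (r', p') ->
  reach (if d then Node l k r else Node r k l, d :: p) c
        (if d then Node l k r' else Node r' k l, d :: p').
Proof.
move=> H.
have := @reach_map (fun st => (if d then Node l k st.1 else Node st.1 k l, d :: st.2)) _ _ _ _ H.
apply => -[a1 a2] [b1 b2] /= Hs; exact: step_side.
Qed.

Fixpoint rspine (s : seq nat) : tree := if s is k :: s' then Node Leaf k (rspine s') else Leaf.

Fixpoint lw (t : tree) : nat := if t is Node l _ r then size (inorder l) + lw r else 0.

Lemma to_spine_gen N u : size (inorder u) + lw u < N ->
  exists2 c, c <= 2 * size (inorder u) + 2 * lw u & reach (u, [::]) c (rspine (inorder u), [::]).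
Proof.
elim: N u => [//|N IH] [|l k r] HN; first by exists 0 => //; constructor.
case: l HN => [|a x c] HN.
- case: r HN => [|l' k' r'] HN; first by exists 0 => //; constructor.
  set r := Node l' k' r'.
  have [c1 Hc1 R1] : exists2 c, c <= 2 * size (inorder r) + 2 * lw r & reach (r, [::]) c (rspine (inorder r), [::]).
    by apply: IH; rewrite /= in HN *; lia_c.
  exists (1 + c1 + 1); first by rewrite /= in Hc1 *; lia_c.
  apply: (@reach_trans _ (Node Leaf k (rspine (inorder r)), [:: true])).
  apply: (@reach_trans _ (Node Leaf k r, [:: true])).
  + apply: reach1; right; left; exists true; split=> //; split=> //.
  + exact: (@reach_side true Leaf k _ _ _ _ _ R1).
  + apply: reach1; left; exists [::], true; split=> //.
- set u' := Node a x (Node c k r).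
  have Hi : inorder u' = inorder (Node (Node a x c) k r) by rewrite /= -catA.
  have [c1 Hc1 R1] : exists2 c1, c1 <= 2 * size (inorder u') + 2 * lw u' & reach (u', [::]) c1 (rspine (inorder u'), [::]).
    apply: IH; rewrite Hi; rewrite /= !size_cat /= in HN *; lia_c.
  exists (1 + 1 + c1); first by rewrite Hi in Hc1; rewrite /= !size_cat /= in Hc1 *; lia_c.
  rewrite -Hi.
  apply: (@reach_trans _ (u', [::])); last exact: R1.
  apply: (@reach_trans _ (Node (Node a x c) k r, [:: false])).
  + apply: reach1; right; left; exists false; split=> //; split=> //.
  + apply: reach1; right; right; exists [::], false, u'; split=> //.
Qed.

Lemma lw_le u : lw u <= size (inorder u).
Proof. elim: u => //= l _ k r IHr; rewrite size_cat /=; lia_c. Qed.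

Lemma to_spine u : exists2 c, c <= 4 * size (inorder u) & reach (u, [::]) c (rspine (inorder u), [::]).
Proof.
have [c Hc R] := @to_spine_gen (size (inorder u) + lw u).+1 u (ltnSn _).
exists c => //; have := lw_le u; lia_c.
Qed.

Lemma pure_conv u u' : inorder u = inorder u' ->
  exists2 c, c <= 16 * size (inorder u) & reach (u, [::]) c (u', [::]).
Proof.
move=> E.
case: u' E => [|l k r] E.
  case: u E => [|l k r] E; first by exists 0 => //; constructor.
  by move: E => /(congr1 size); rewrite /= size_cat /= addnS.
have [c1 Hc1 R1] := to_spine u.
have [c2 Hc2 R2] := to_spine (Node l k r).
have [c3 Hc3 R3] := reach_rev R2 ltac:(done).
exists (c1 + c3); last by apply: reach_trans R1 _; rewrite E.
rewrite E in Hc1 *; lia_c.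
Qed.


Fixpoint fill (B : option nat -> option nat -> tree) (t : tree) (lo hi : option nat) : tree :=
  if t is Node l k r then Node (fill B l lo (Some k)) k (fill B r (Some k) hi) else B lo hi.

Lemma subtree_fill B t p lo hi : subtree t p <> Leaf ->
  exists lo' hi', subtree (fill B t lo hi) p = fill B (subtree t p) lo' hi' /\
    forall s, replace (fill B t lo hi) p (fill B s lo' hi') = fill B (replace t p s) lo hi.
Proof.
elim: p t lo hi => [|b p IH] t lo hi.
  move=> _; exists lo, hi; rewrite !subtree_nil; split=> // s; by rewrite !replace_nil.
case: t => [|l k r] /=; first by rewrite ?subtree_leaf => /(_ erefl).
case: b => H.
- have [lo' [hi' [H1 H2]]] := IH r (Some k) hi H.
  exists lo', hi'; split=> // s; by rewrite H2.
- have [lo' [hi' [H1 H2]]] := IH l lo (Some k) H.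
  exists lo', hi'; split=> // s; by rewrite H2.
Qed.

Lemma key_at_fill B t p lo hi x : key_at t p = Some x -> key_at (fill B t lo hi) p = Some x.
Proof.
rewrite /key_at => H.
have Hn : subtree t p <> Leaf by move=> E; rewrite E in H.
have [lo' [hi' [-> _]]] := subtree_fill B lo hi Hn.
by case: (subtree t p) H => [|l k r] //=.
Qed.

Lemma rotate_fill B b u s lo hi : rotate b u = Some s -> rotate b (fill B u lo hi) = Some (fill B s lo hi).
Proof. by case: b; case: u => [|[|? ? ?] ? [|? ? ?]] //= [<-]. Qed.

Lemma step_fill B lo hi t p t' p' : step (t, p) (t', p') -> step (fill B t lo hi, p) (fill B t' lo hi, p').
Proof.
case=> [[q [b [-> [-> ->]]]]|[[b [-> [-> H]]]|[q [b [s [-> [Hr [-> ->]]]]]]]].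
- left; by exists q, b.
- right; left; exists b; split=> //; split=> //.
  case E: (key_at t (rcons p b)) H => [x|] // _.
  by rewrite (key_at_fill B lo hi E).
- right; right.
  have Hn : subtree t q <> Leaf by move=> E; rewrite E in Hr; case: b Hr.
  have [lo' [hi' [H1 H2]]] := subtree_fill B lo hi Hn.
  exists q, b, (fill B s lo' hi'); split=> //; split; last by rewrite H2.
  by rewrite H1; apply: rotate_fill.
Qed.

Lemma reach_fill B lo hi t p c t' p' : reach (t, p) c (t', p') ->
  reach (fill B t lo hi, p) c (fill B t' lo hi, p').
Proof.
move=> H.
have := @reach_map (fun st => (fill B st.1 lo hi, st.2)) _ _ _ _ H.
apply => -[a1 a2] [b1 b2] /= Hs; exact: step_fill.
Qed.

Definition search_rr (t : tree) (x : nat) (c : nat) (t' : tree) : Prop :=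
  exists t1 p1 c1 c2,
    [/\ reach (t, [::]) c1 (t1, p1), key_at t1 p1 = Some x,
        reach (t1, p1) c2 (t', [::]) & c = c1 + c2].

Inductive run : tree -> seq nat -> nat -> tree -> Prop :=
| run_nil t c t' : reach (t, [::]) c (t', [::]) -> run t [::] c t'
| run_cons t x xs c1 t1 c2 t2 : search_rr t x c1 t1 -> run t1 xs c2 t2 -> run t (x :: xs) (c1 + c2) t2.

Lemma run_fill B lo hi t s c t' : run t s c t' -> run (fill B t lo hi) s c (fill B t' lo hi).
Proof.
elim=> [a k b H|a x xs c1 t1 c2 t2 [u [p [k1 [k2 [R1 Hk R2 ->]]]]] _ IH].
  constructor; exact: reach_fill H.
apply: run_cons IH.
exists (fill B u lo hi), p, k1, k2; split=> //; try exact: reach_fill.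
exact: key_at_fill.
Qed.

Lemma run_pre t0 t s c t' k : reach (t0, [::]) k (t, [::]) -> run t s c t' -> run t0 s (k + c) t'.
Proof.
move=> R H; case: H R => [a k' b H|a x xs c1 t1 c2 t2 [u [p [k1 [k2 [R1 Hk R2 ->]]]]] Hr] R.
  constructor; exact: reach_trans R H.
rewrite addnA; apply: run_cons Hr.
exists u, p, (k + k1), k2; split=> //; first exact: reach_trans R R1.
by rewrite addnA.
Qed.

Lemma run_cat t s1 c1 t1 s2 c2 t2 : run t s1 c1 t1 -> run t1 s2 c2 t2 -> run t (s1 ++ s2) (c1 + c2) t2.
Proof.
elim=> [a k b H|a x xs k1 u k2 v Hs _ IH] H2 /=.
  exact: run_pre H H2.
rewrite -addnA; apply: run_cons Hs _; exact: IH.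
Qed.

Lemma run_post t s c t1 k t' : run t s c t1 -> reach (t1, [::]) k (t', [::]) -> run t s (c + k) t'.
Proof.
move=> H R; have := run_cat H (run_nil R); by rewrite cats0.
Qed.

Lemma run_serve t s c t' : run t s c t' -> exists2 c', c' <= c & serve t s c'.
Proof.
elim=> [a k b H|a x xs c1 t1 c2 t2 [u [p [k1 [k2 [R1 Hk R2 ->]]]]] _ [c' Hc' IH]].
  by exists 0 => //; constructor.
exists (k1 + k2 + c'); first lia_c.
apply: serve_cons IH.
exists u, p, k1, [::], k2; split=> //.
Qed.


Definition ltL (lo : option nat) (k : nat) : bool := if lo is Some a then a < k else true.
Definition ltR (k : nat) (hi : option nat) : bool := if hi is Some b then k < b else true.
Definition inI lo hi k := ltL lo k && ltR k hi.

Fixpoint sub (X : tree) (lo hi : option nat) : tree :=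
  if X is Node l k r then
    if ~~ ltL lo k then sub r lo hi
    else if ~~ ltR k hi then sub l lo hi
    else X
  else Leaf.

Fixpoint cut (Q : pred nat) (t : tree) : tree :=
  if t is Node l k r then (if Q k then Node (cut Q l) k (cut Q r) else Leaf) else Leaf.

Fixpoint gap (u : tree) lo hi x y : Prop :=
  if u is Node l k r then gap l lo (Some k) x y \/ gap r (Some k) hi x y
  else x = lo /\ y = hi.

Lemma mem_node z l k r :
  (z \in inorder (Node l k r)) = [|| z \in inorder l, z == k | z \in inorder r].
Proof. by rewrite /= mem_cat in_cons. Qed.

Lemma sorted_node l k r : sorted ltn (inorder (Node l k r)) ->
  [/\ all (ltn^~ k) (inorder l), all (ltn k) (inorder r),
      sorted ltn (inorder l) & sorted ltn (inorder r)].
Proof.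
rewrite /= !(sorted_pairwise ltn_trans) pairwise_cat /= allrel_consr.
by case/and4P => /andP[a _] b c d; split.
Qed.

Lemma subtree_sub_keys t p : {subset inorder (subtree t p) <= inorder t}.
Proof.
elim: p t => [|b p IH] t; first by rewrite subtree_nil.
case: t => [|l k r] /=; first by rewrite ?subtree_leaf.
move=> z /IH; rewrite mem_cat in_cons; case: b => ->; by rewrite ?orbT.
Qed.

Lemma sorted_subtree t p : sorted ltn (inorder t) -> sorted ltn (inorder (subtree t p)).
Proof.
elim: p t => [|b p IH] t; first by rewrite subtree_nil.
case: t => [|l k r] /=; first by rewrite ?subtree_leaf.
move/sorted_node => [_ _ Hl Hr]; case: b; exact: IH.
Qed.

Lemma size_subtree t p : size (inorder (subtree t p)) <= size (inorder t).
Proof.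
elim: p t => [|b p IH] t; first by rewrite subtree_nil.
case: t => [|l k r] /=; first by rewrite ?subtree_leaf.
rewrite size_cat /=; case: b; [have := IH r | have := IH l]; lia_c.
Qed.

Lemma inorder_rspine s : inorder (rspine s) = s.
Proof. by elim: s => //= k s ->. Qed.

Lemma ltL_mono x z k : ~~ ltL x k -> z <= k -> ~~ ltL x z.
Proof. by case: x => //= a; lia_c. Qed.
Lemma ltR_mono y z k : ~~ ltR k y -> k <= z -> ~~ ltR z y.
Proof. by case: y => //= a; lia_c. Qed.

Lemma sub_spec X x y : sorted ltn (inorder X) ->
  (sub X x y = Leaf /\ forall k, k \in inorder X -> ~~ inI x y k) \/
  (exists p l v r, [/\ subtree X p = Node l v r, sub X x y = Node l v r, inI x y v &
      forall k, k \in inorder X -> inI x y k -> k \in inorder (Node l v r)]).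
Proof.
elim: X => [|l IHl k r IHr] /=; first by left.
move=> /sorted_node [Hl Hr sl sr].
case Ex: (ltL x k) => /=; last first.
  have nl : forall z, z <= k -> ~~ ltL x z by move=> z; apply: ltL_mono; rewrite Ex.
  case: (IHr sr) => [[-> H]|[p [l' [v [r' [H1 H2 H3 H4]]]]]].
    left; split=> // z; rewrite mem_cat in_cons => /or3P[/(allP Hl) /= zl|/eqP->|/H //];
    rewrite /inI negb_and nl //; lia_c.
  right; exists (true :: p), l', v, r'; split=> // z.
  rewrite mem_cat in_cons => /or3P[/(allP Hl) /= zl|/eqP->|zr]; rewrite /inI.
  - by rewrite (negPf (nl z _)) //; lia_c.
  - by rewrite Ex.
  - exact: H4.
case Ey: (ltR k y) => /=; last first.
  have nr : forall z, k <= z -> ~~ ltR z y by move=> z; apply: ltR_mono; rewrite Ey.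
  case: (IHl sl) => [[-> H]|[p [l' [v [r' [H1 H2 H3 H4]]]]]].
    left; split=> // z; rewrite mem_cat in_cons => /or3P[/H //|/eqP->|/(allP Hr) /= zr];
    rewrite /inI negb_and nr ?orbT //; lia_c.
  right; exists (false :: p), l', v, r'; split=> // z.
  rewrite mem_cat in_cons => /or3P[zl|/eqP->|/(allP Hr) /= zr]; rewrite /inI.
  - exact: H4.
  - by rewrite Ey andbF.
  - by rewrite (negPf (nr z _)) ?andbF //; lia_c.
right; exists [::], l, k, r; split=> //.
by rewrite /inI Ex Ey.
Qed.

Lemma sub_leaf X x y : sorted ltn (inorder X) -> (forall k, k \in inorder X -> ~~ inI x y k) ->
  sub X x y = Leaf.
Proof.
move=> sX H; case: (sub_spec x y sX) => [[]//|[p [l [v [r [H1 H2 H3 H4]]]]]].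
have : v \in inorder X by apply: (subtree_sub_keys (p := p)); rewrite H1 mem_node eqxx orbT.
by move/H; rewrite H3.
Qed.

Lemma convex X p a b c : sorted ltn (inorder X) ->
  a \in inorder (subtree X p) -> c \in inorder (subtree X p) -> b \in inorder X ->
  a <= b -> b <= c -> b \in inorder (subtree X p).
Proof.
elim: p X => [|d p IH] X; first by rewrite subtree_nil.
case: X => [|l k r] /=; first by rewrite ?subtree_leaf.
move=> sX; have [Hl Hr sl sr] := sorted_node sX.
case: d => Ha Hc; rewrite mem_cat in_cons => Hb ab bc.
- have ka : k < a by apply: (allP Hr); exact: (subtree_sub_keys Ha).
  apply: IH => //; case/or3P: Hb => [/(allP Hl) /= ?|/eqP ?|] //; lia_c.
- have ck : c < k by apply: (allP Hl); exact: (subtree_sub_keys Hc).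
  apply: IH => //; case/or3P: Hb => [|/eqP ?|/(allP Hr) /= ?] //; lia_c.
Qed.

Lemma topc_all Q t : all (predC Q) (inorder t) -> topc Q t.
Proof.
elim: t => //= l IHl k r IHr; rewrite all_cat /= => /andP[al /andP[nk ar]].
by rewrite (negPf nk) al ar.
Qed.

Lemma topc_subtree Q t p : topc Q t -> topc Q (subtree t p).
Proof.
elim: p t => [|b p IH] t; first by rewrite subtree_nil.
case: t => [|l k r] /=; first by move=> ?; rewrite ?subtree_leaf.
case: (Q k) => [/andP[tl tr]|Ha]; first by case: b; apply: IH.
apply: topc_all; apply/allP => z /subtree_sub_keys Hz; apply: (allP Ha).
by case: b Hz => Hz; rewrite mem_cat in_cons Hz ?orbT.
Qed.

Lemma topc_node_notQ Q l v r : topc Q (Node l v r) -> ~~ Q v -> all (predC Q) (inorder (Node l v r)).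
Proof. by rewrite /=; case: (Q v). Qed.

Lemma cut_inorder Q t : topc Q t -> inorder (cut Q t) = filter Q (inorder t).
Proof.
elim: t => //= l IHl k r IHr; case Qk: (Q k) => /=.
  by case/andP => /IHl -> /IHr ->; rewrite filter_cat /= Qk.
rewrite all_cat /= => /andP[al /andP[nk ar]].
rewrite filter_cat /= (negPf nk).
by rewrite !(eq_in_filter (a2 := pred0)) ?filter_pred0 // => z Hz;
  apply/negbTE; [apply: (allP ar) | apply: (allP al)].
Qed.

Lemma cut_keys Q t : {subset inorder (cut Q t) <= inorder t}.
Proof.
elim: t => //= l IHl k r IHr; case: (Q k) => //= z.
rewrite !mem_cat !in_cons => /or3P[/IHl->|->|/IHr->] //; by rewrite ?orbT.
Qed.

Lemma sorted_cut Q t : sorted ltn (inorder t) -> sorted ltn (inorder (cut Q t)).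
Proof.
elim: t => //= l IHl k r IHr /sorted_node[Hl Hr sl sr]; case: (Q k) => //=.
rewrite (sorted_pairwise ltn_trans) pairwise_cat /= allrel_consr.
rewrite -!(sorted_pairwise ltn_trans) IHl // IHr // andbT.
have al : all (ltn^~ k) (inorder (cut Q l)) by apply/allP => z /cut_keys /(allP Hl).
have ar : all (ltn k) (inorder (cut Q r)) by apply/allP => z /cut_keys /(allP Hr).
rewrite al /= ar andbT; apply/allrelP => a b /(allP al) /= ? /(allP ar) /= ?; lia_c.
Qed.


Lemma In_seq_cat x s1 s2 : In_seq x (s1 ++ s2) <-> In_seq x s1 \/ In_seq x s2.
Proof.
elim: s1 => [|y s IH] /=; first by split; [right|case].
rewrite IH; tauto.
Qed.

Lemma hanging_cover P T h : topc P T -> h \in inorder T -> ~~ P h ->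
  exists R, In_seq R (hanging P T) /\ h \in inorder R.
Proof.
elim: T => //= l IHl k r IHr; case Pk: (P k) => /=.
  case/andP => tl tr; rewrite mem_cat in_cons => /or3P[hl|/eqP->|hr] nh.
  - have [R [H1 H2]] := IHl tl hl nh; exists R; split=> //; apply/In_seq_cat; by left.
  - by rewrite Pk in nh.
  - have [R [H1 H2]] := IHr tr hr nh; exists R; split=> //; apply/In_seq_cat; by right.
move=> _ Hh _; exists (Node l k r); split; [by left | exact: Hh].
Qed.

Lemma hanging_prop P T R : topc P T -> In_seq R (hanging P T) ->
  all (predC P) (inorder R) /\ exists p, subtree T p = R.
Proof.
elim: T => //= l IHl k r IHr; case Pk: (P k) => /=.
  case/andP => tl tr /In_seq_cat [H|H].
  - have [H1 [p Hp]] := IHl tl H; split=> //; by exists (false :: p).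
  - have [H1 [p Hp]] := IHr tr H; split=> //; by exists (true :: p).
move=> Ha [<-|//]; split=> //; by exists [::].
Qed.

Lemma subtree_nest X p p' l v r : sorted ltn (inorder X) ->
  subtree X p' = Node l v r -> v \in inorder (subtree X p) ->
  exists p'', subtree (subtree X p) p'' = Node l v r.
Proof.
elim: p X p' => [|b q IH] X p' sX HS Hv; first by exists p'; rewrite subtree_nil.
case: X sX HS Hv => [|l0 k r0] sX HS; first by rewrite ?subtree_leaf.
have [Hl Hr sl sr] := sorted_node sX.
case: p' HS => [|b' q'] /=.
  move=> -[_ <- _] Hv; exfalso.
  case: b Hv => /subtree_sub_keys Hv; [have /= := allP Hr _ Hv | have /= := allP Hl _ Hv]; lia_c.
move=> HS Hv.
have Hv' : v \in inorder (subtree (if b' then r0 else l0) q') by rewrite HS mem_node eqxx orbT.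
case: b b' Hv HS Hv' => [] [] Hv HS Hv'.
- exact: IH HS Hv.
- move/subtree_sub_keys: Hv => /(allP Hr) /=; move/subtree_sub_keys: Hv' => /(allP Hl) /=; lia_c.
- move/subtree_sub_keys: Hv => /(allP Hl) /=; move/subtree_sub_keys: Hv' => /(allP Hr) /=; lia_c.
- exact: IH HS Hv.
Qed.

Lemma subtree_size_eq H p : size (inorder H) <= size (inorder (subtree H p)) -> subtree H p = H.
Proof.
case: p => [|b p]; first by rewrite subtree_nil.
case: H => [|l k r] /=; first by rewrite ?subtree_leaf.
rewrite size_cat /=; case: b; [have := size_subtree r p | have := size_subtree l p]; lia_c.
Qed.

Lemma fill_ext G G' u lo hi : (forall x y, gap u lo hi x y -> G x y = G' x y) ->
  fill G u lo hi = fill G' u lo hi.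
Proof.
elim: u lo hi => [|l IHl k r IHr] lo hi /= H; first by apply: H.
by rewrite IHl ?IHr // => x y Hg; apply: H; [right|left].
Qed.

Lemma fill_comp B G u lo hi :
  fill B (fill G u lo hi) lo hi = fill (fun x y => fill B (G x y) x y) u lo hi.
Proof. by elim: u lo hi => //= l IHl k r IHr lo hi; rewrite IHl IHr. Qed.

Lemma gap_ends u lo hi x y : gap u lo hi x y ->
  (x = lo \/ exists2 x0, x = Some x0 & x0 \in inorder u) /\
  (y = hi \/ exists2 y0, y = Some y0 & y0 \in inorder u).
Proof.
elim: u lo hi => [|l IHl k r IHr] lo hi /=; first by case=> -> ->; split; left.
case=> [/IHl|/IHr] [Hx Hy]; split.
- case: Hx => [->|[x0 -> H]]; [by left | right; exists x0 => //; by rewrite mem_cat H].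
- case: Hy => [->|[y0 -> H]]; right; [exists k => //|exists y0 => //]; by rewrite mem_cat ?in_cons ?eqxx ?H ?orbT.
- case: Hx => [->|[x0 -> H]]; right; [exists k => //|exists x0 => //]; by rewrite mem_cat ?in_cons ?eqxx ?H ?orbT.
- case: Hy => [->|[y0 -> H]]; [by left | right; exists y0 => //; by rewrite mem_cat in_cons H !orbT].
Qed.

Lemma ltR_lt z k hi : z < k -> ltR k hi -> ltR z hi.
Proof. by case: hi => //= h; lia_c. Qed.
Lemma ltL_lt z k lo : k < z -> ltL lo k -> ltL lo z.
Proof. by case: lo => //= h; lia_c. Qed.

Lemma gap_in u lo hi x y : sorted ltn (inorder u) -> all (inI lo hi) (inorder u) ->
  gap u lo hi x y ->
  (forall k, inI x y k -> inI lo hi k) /\ (forall k, k \in inorder u -> ~~ inI x y k).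
Proof.
elim: u lo hi => [|l IHl k r IHr] lo hi /=; first by move=> _ _ [-> ->].
move=> /sorted_node[Hl Hr sl sr]; rewrite all_cat /= => /andP[al /andP[ik ar]].
case/andP: ik => ik1 ik2.
case=> Hg.
- have al' : all (inI lo (Some k)) (inorder l).
    apply/allP => z Hz; have /= zk := allP Hl z Hz; rewrite /inI /= zk andbT.
    by case/andP: (allP al z Hz).
  have [H1 H2] := IHl _ _ sl al' Hg; split.
    move=> z /H1 /andP[lz /= zk]; rewrite /inI lz; exact: ltR_lt zk ik2.
  move=> z; rewrite mem_cat in_cons => /or3P[/H2 //|/eqP->|zr].
  + by apply/negP => /H1 /andP[_ /=]; rewrite ltnn.
  + apply/negP => /H1 /andP[_ /=]; have /= := allP Hr z zr; lia_c.
- have ar' : all (inI (Some k) hi) (inorder r).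
    apply/allP => z Hz; have /= kz := allP Hr z Hz; rewrite /inI /= kz /=.
    by case/andP: (allP ar z Hz).
  have [H1 H2] := IHr _ _ sr ar' Hg; split.
    move=> z /H1 /andP[/= kz rz]; rewrite /inI rz andbT; exact: ltL_lt kz ik1.
  move=> z; rewrite mem_cat in_cons => /or3P[zl|/eqP->|/H2 //].
  + apply/negP => /H1 /andP[/= ]; have /= := allP Hl z zl; lia_c.
  + by apply/negP => /H1 /andP[/=]; rewrite ltnn.
Qed.

Lemma all_inI_node l k r lo hi : sorted ltn (inorder (Node l k r)) ->
  all (inI lo hi) (inorder (Node l k r)) ->
  [/\ all (inI lo (Some k)) (inorder l), all (inI (Some k) hi) (inorder r) & inI lo hi k].
Proof.
move=> /sorted_node[Hl Hr sl sr]; rewrite /= all_cat /= => /andP[al /andP[ik ar]].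
split=> //.
- apply/allP => z Hz; have /= zk := allP Hl z Hz; rewrite /inI /= zk andbT.
  by case/andP: (allP al z Hz).
- apply/allP => z Hz; have /= kz := allP Hr z Hz; rewrite /inI /= kz /=.
  by case/andP: (allP ar z Hz).
Qed.

Lemma decomp Q X lo hi : sorted ltn (inorder X) -> all (inI lo hi) (inorder X) ->
  X = fill (sub X) (cut Q X) lo hi.
Proof.
elim: X lo hi => [|l IHl k r IHr] lo hi //= sX aX.
have [al ar /andP[ik1 ik2]] := all_inI_node sX aX.
have [Hl Hr sl sr] := sorted_node sX.
case Qk: (Q k) => /=; last by rewrite ik1 ik2.
congr Node.
- rewrite {1}(IHl lo (Some k) sl al); apply: fill_ext => x y /gap_ends [Hx Hy] /=.
  have -> : ltL x k.
    case: Hx => [->|[x0 -> /cut_keys Hx0]] //=; exact: (allP Hl).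
  have -> : ltR k y = false.
    case: Hy => [->|[y0 -> /cut_keys Hy0]] /=; first by rewrite ltnn.
    have /= := allP Hl _ Hy0; lia_c.
  by [].
- rewrite {1}(IHr (Some k) hi sr ar); apply: fill_ext => x y /gap_ends [Hx Hy] /=.
  have -> : ltL x k = false.
    case: Hx => [->|[x0 -> /cut_keys Hx0]] /=; first by rewrite ltnn.
    have /= := allP Hr _ Hx0; lia_c.
  by [].
Qed.


Definition bnd_ok (f : nat -> bool) (P : pred nat) (s : seq nat) :=
  all (fun xy => (f xy.1 != f xy.2) ==> (P xy.1 && P xy.2)) (zip s (behead s)).

Lemma sorted_consE a s : sorted ltn (a :: s) -> all (ltn a) s /\ sorted ltn s.
Proof. move=> H; split; [exact: order_path_min ltn_trans H | exact: path_sorted H]. Qed.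

Lemma bnd_ok_cons f P a b s : bnd_ok f P [:: a, b & s] ->
  ((f a != f b) ==> (P a && P b)) /\ bnd_ok f P (b :: s).
Proof. by rewrite /bnd_ok /= => /andP[-> ->]. Qed.

Lemma block1 f P s : sorted ltn s -> bnd_ok f P s ->
  forall w z, w \in s -> z \in s -> w < z -> f w != f z ->
  exists2 l, l \in s & [&& P l, f l == f w, w <= l & l < z].
Proof.
elim: s => [|a s IH] //= sS bS w z.
have [aS ss] := sorted_consE sS.
rewrite !in_cons => Hw Hz wz fwz.
have zs : z \in s.
  case/orP: Hz => [/eqP zE|//]; case/orP: Hw => [/eqP wE|ws]; first lia_c.
  have /= := allP aS w ws; lia_c.
case: s IH sS bS aS ss zs Hw {Hz} => [//|b s] IH sS bS aS ss zs Hw.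
have [bab bS'] := bnd_ok_cons bS.
case/orP: Hw => [/eqP wE|ws].
- subst w.
  case fab: (f a != f b).
    have /andP[Pa _] := implyP bab fab.
    exists a; first by rewrite in_cons eqxx.
    by rewrite Pa eqxx leqnn wz.
  have fb : f b = f a by move/negbFE/eqP: fab.
  have bz : b < z.
    move: zs; rewrite in_cons => /orP[/eqP zb|zs']; first by subst z; rewrite fb eqxx in fwz.
    have [bS2 _] := sorted_consE ss; have /= := allP bS2 z zs'; lia_c.
  have := IH ss bS' b z (mem_head _ _) zs bz; rewrite fb => /(_ fwz) [l Hl H].
  exists l; first by rewrite in_cons Hl orbT.
  case/and4P: H => Pl /eqP fl bl lz; rewrite Pl fl eqxx lz /= andbT.
  have /= := allP aS b (mem_head _ _); lia_c.
- have [l Hl H] := IH ss bS' w z ws zs wz fwz.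
  exists l => //; by rewrite in_cons Hl orbT.
Qed.

Lemma block2 f P s : sorted ltn s -> bnd_ok f P s ->
  forall w z, w \in s -> z \in s -> z < w -> f w != f z ->
  exists2 l, l \in s & [&& P l, f l == f w, z < l & l <= w].
Proof.
elim: s => [|a s IH] //= sS bS w z.
have [aS ss] := sorted_consE sS.
rewrite !in_cons => Hw Hz zw fwz.
have ws : w \in s.
  case/orP: Hw => [/eqP wE|//]; case/orP: Hz => [/eqP zE|zs]; first lia_c.
  have /= := allP aS z zs; lia_c.
case: s IH sS bS aS ss ws Hz {Hw} => [//|b s] IH sS bS aS ss ws Hz.
have [bab bS'] := bnd_ok_cons bS.
case/orP: Hz => [/eqP zE|zs].
- subst z.
  have bw : b <= w.
    move: ws; rewrite in_cons => /orP[/eqP ->//|ws'].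
    have [bS2 _] := sorted_consE ss; have /= := allP bS2 w ws'; lia_c.
  have ab : a < b by have /= := allP aS b (mem_head _ _).
  case fbw: (f b == f w).
    have fab : f a != f b by rewrite (eqP fbw) eq_sym.
    have /andP[_ Pb] := implyP bab fab.
    exists b; first by rewrite !in_cons eqxx orbT.
    by rewrite Pb fbw ab bw.
  have bw' : b < w.
    rewrite ltn_neqAle bw andbT; apply/negP => /eqP E; by rewrite E eqxx in fbw.
  have fwb : f w != f b by rewrite eq_sym fbw.
  have [l Hl H] := IH ss bS' w b ws (mem_head _ _) bw' fwb.
  exists l; first by rewrite in_cons Hl orbT.
  case/and4P: H => -> -> /= bl ->; rewrite andbT; lia_c.
- have [l Hl H] := IH ss bS' w z ws zs zw fwz.
  exists l => //; by rewrite in_cons Hl orbT.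
Qed.

Lemma filter_split (s : seq nat) (Q : pred nat) lo hi k :
  sorted ltn s -> k \in s -> Q k -> inI lo hi k ->
  filter (fun z => Q z && inI lo (Some k) z) s ++ k :: filter (fun z => Q z && inI (Some k) hi z) s =
  filter (fun z => Q z && inI lo hi z) s.
Proof.
move=> sS Hk; case/splitPr: Hk sS => s1 s2 sS Qk /andP[ik1 ik2].
move: sS; rewrite (sorted_pairwise ltn_trans) pairwise_cat /= allrel_consr => /and4P[/andP[a1 _] _ a2 _].
rewrite !filter_cat /= Qk /inI /= ltnn /= andbF ik1 ik2 /=.
have E1 : filter (fun z => Q z && (ltL lo z && ltR z (Some k))) s1 = filter (fun z => Q z && (ltL lo z && ltR z hi)) s1.
  apply: eq_in_filter => z Hz; have /= zk := allP a1 z Hz; by rewrite /= zk (ltR_lt zk ik2).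
have E2 : filter (fun z => Q z && (ltL (Some k) z && ltR z hi)) s1 = [::].
  apply/eqP; rewrite -(filter_pred0 s1) ; apply/eqP; apply: eq_in_filter => z Hz.
  have /= zk := allP a1 z Hz; rewrite /=; have -> : k < z = false by lia_c. by rewrite andbF.
have E3 : filter (fun z => Q z && (ltL lo z && ltR z (Some k))) s2 = [::].
  apply/eqP; rewrite -(filter_pred0 s2) ; apply/eqP; apply: eq_in_filter => z Hz.
  have /= zk := allP a2 z Hz; rewrite /=; have -> : z < k = false by lia_c. by rewrite !andbF.
have E4 : filter (fun z => Q z && (ltL (Some k) z && ltR z hi)) s2 = filter (fun z => Q z && (ltL lo z && ltR z hi)) s2.
  apply: eq_in_filter => z Hz; have /= kz := allP a2 z Hz; by rewrite /= kz (ltL_lt kz ik1).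
by rewrite E1 E2 E3 E4 /= cats0.
Qed.

Definition spineB (s : seq nat) (Q : pred nat) : option nat -> option nat -> tree :=
  fun x y => rspine (filter (fun z => Q z && inI x y z) s).

Lemma fill_spine_inorder s Q u lo hi : sorted ltn s -> sorted ltn (inorder u) ->
  all (inI lo hi) (inorder u) -> all (fun k => (k \in s) && Q k) (inorder u) ->
  inorder (fill (spineB s Q) u lo hi) = filter (fun z => Q z && inI lo hi z) s.
Proof.
move=> sS; elim: u lo hi => [|l IHl k r IHr] lo hi /=; first by rewrite inorder_rspine.
move=> su au; have [al ar ik] := all_inI_node su au.
have [_ _ sl sr] := sorted_node su.
rewrite all_cat /= => /andP[bl /andP[/andP[ks Qk] br]].
by rewrite IHl // IHr // filter_split.
Qed.


Lemma filter_none (a : pred nat) s : (forall z, z \in s -> ~~ a z) -> filter a s = [::].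
Proof. move=> H; apply/eqP; rewrite -[_ == _]negbK -has_filter; exact/hasPn. Qed.

Lemma fill_leafs t lo hi : fill (fun _ _ => Leaf) t lo hi = t.
Proof. by elim: t lo hi => //= l IHl k r IHr lo hi; rewrite IHl IHr. Qed.

Lemma confine X (Q : pred nat) p x y v : sorted ltn (inorder X) ->
  all (predC Q) (inorder (subtree X p)) -> v \in inorder (subtree X p) -> inI x y v ->
  (forall x0, x = Some x0 -> (x0 \in inorder X) && Q x0) ->
  (forall y0, y = Some y0 -> (y0 \in inorder X) && Q y0) ->
  forall z, z \in inorder (subtree X p) -> inI x y z.
Proof.
move=> sX aS Hv /andP[vx vy] Hx Hy z Hz; rewrite /inI; apply/andP; split.
- case Ex: x vx => [x0|] //= x0v; rewrite ltnNge; apply/negP => zx.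
  have /andP[x0X Qx0] := Hx x0 Ex.
  have := convex sX Hz Hv x0X zx (ltnW x0v) => /(allP aS) /=; by rewrite Qx0.
- case Ey: y vy => [y0|] //= vy0; rewrite ltnNge; apply/negP => yz.
  have /andP[y0X Qy0] := Hy y0 Ey.
  have := convex sX Hv Hz y0X (ltnW vy0) yz => /(allP aS) /=; by rewrite Qy0.
Qed.

Lemma ltL_le z k lo : k <= z -> ltL lo k -> ltL lo z.
Proof. by case: lo => //= h; lia_c. Qed.
Lemma ltR_le z k hi : z <= k -> ltR k hi -> ltR z hi.
Proof. by case: hi => //= h; lia_c. Qed.

Lemma side (T TX TY : tree) (P PX : pred nat) :
  sorted ltn (inorder T) -> sorted ltn (inorder TX) ->
  (forall k, (k \in inorder T) = (k \in inorder TX) || (k \in inorder TY)) ->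
  (forall k, k \in inorder TX -> k \notin inorder TY) ->
  topc P T -> topc PX TX ->
  (forall k, k \in inorder TX -> P k = PX k) ->
  (forall s, In_seq s (hanging P T) -> is_subtree_of s TX \/ is_subtree_of s TY) ->
  (forall w z, w \in inorder TX -> z \in inorder TY -> w < z ->
     exists2 l, l \in inorder TX & P l && (w <= l < z)) ->
  (forall w z, w \in inorder TX -> z \in inorder TY -> z < w ->
     exists2 l, l \in inorder TX & P l && (z < l <= w)) ->
  exists B u, fill B TX None None = fill (sub T) u None None /\ inorder u = filter P (inorder T).
Proof.
move=> sT sX kT dXY tP tX PPX hang bl1 bl2.
set u0 := cut PX TX.
set Bt := spineB (inorder T) P.
set B := fun x y => fill (sub T) (Bt x y) x y.
have su0 : sorted ltn (inorder u0) by apply: sorted_cut.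
have iu0 : inorder u0 = filter PX (inorder TX) by apply: cut_inorder.
have au0 : all (inI None None) (inorder u0) by apply/allP.
exists B, (fill Bt u0 None None); split; last first.
  rewrite fill_spine_inorder //.
    by apply: eq_filter => z; rewrite /inI andbT.
  apply/allP => z; rewrite iu0 mem_filter => /andP[Pz zX].
  by rewrite kT zX /= PPX.
rewrite fill_comp {1}(decomp PX sX (lo := None) (hi := None)) //; last by apply/allP.
rewrite fill_comp; apply: fill_ext => x y Hg.
have [Hx Hy] := gap_ends Hg.
have [Hin Hno] := gap_in su0 au0 Hg.
have Ex : forall x0, x = Some x0 -> (x0 \in inorder TX) && PX x0.
  move=> x0 E; case: Hx => [|[x1 E1]]; first by rewrite E.
  by rewrite E in E1; case: E1 => <-; rewrite iu0 mem_filter andbC.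
have Ey : forall y0, y = Some y0 -> (y0 \in inorder TX) && PX y0.
  move=> y0 E; case: Hy => [|[y1 E1]]; first by rewrite E.
  by rewrite E in E1; case: E1 => <-; rewrite iu0 mem_filter andbC.
have noPX : forall z, z \in inorder TX -> inI x y z -> ~~ PX z.
  move=> z zX zi; apply/negP => Pz; have := Hno z; rewrite iu0 mem_filter Pz zX zi.
  by move/(_ isT).
case: (sub_spec x y sX) => [[-> _]//|[p [l [v [r [H1 H2 H3 H4]]]]]].
rewrite H2; set H := Node l v r.
have vX : v \in inorder TX by apply: (subtree_sub_keys (p := p)); rewrite H1 mem_node eqxx orbT.
have nPv : ~~ PX v by apply: noPX.
have aH : all (predC PX) (inorder H).
  apply: topc_node_notQ nPv; rewrite -H1; exact: topc_subtree.
have cH : forall z, z \in inorder H -> inI x y z.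
  rewrite /H -H1; apply: (confine sX (Q := PX) (v := v)); rewrite ?H1 //.
  by rewrite mem_node eqxx orbT.
have dT : forall z, z \in inorder T -> inI x y z -> z \in inorder H.
  move=> z; rewrite kT => /orP[zX zi|zY zi]; first exact: H4.
  exfalso.
  have /andP[vx vy] := H3; have /andP[zx zy] := zi.
  case: (ltngtP v z) => [vz|zv|E]; last by move: zY; rewrite -E => zY; have := dXY _ vX; rewrite zY.
  - have [l0 l0X /andP[Pl0 /andP[vl0 l0z]]] := bl1 v z vX zY vz.
    have : inI x y l0 by rewrite /inI (ltL_le vl0 vx) (ltR_lt l0z zy).
    by move/(noPX _ l0X); rewrite -PPX // Pl0.
  - have [l0 l0X /andP[Pl0 /andP[zl0 l0v]]] := bl2 v z vX zY zv.
    have : inI x y l0 by rewrite /inI (ltL_lt zl0 zx) (ltR_le l0v vy).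
    by move/(noPX _ l0X); rewrite -PPX // Pl0.
have noP : forall z, z \in inorder T -> inI x y z -> ~~ P z.
  move=> z zT zi; have zH := dT z zT zi.
  have zX : z \in inorder TX by rewrite /H -H1 in zH; exact: subtree_sub_keys zH.
  by rewrite PPX //; apply: noPX.
have vT : v \in inorder T by rewrite kT vX.
have sH : sorted ltn (inorder H) by rewrite /H -H1; apply: sorted_subtree.
have uH : uniq (inorder H) by apply: sorted_uniq sH; [exact: ltn_trans | exact: ltnn].
have [q Hq] : exists q, subtree T q = H.
  have [R [HR vR]] := hanging_cover tP vT (noP v vT H3).
  have [aR [q Rq]] := hanging_prop tP HR.
  case: (hang R HR) => [[q' Rq']|[q' Rq']]; last first.
    by have := dXY _ vX; rewrite -Rq' in vR; rewrite (subtree_sub_keys vR).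
  have aR' : all (predC PX) (inorder (subtree TX q')).
    apply/allP => z zR; have zX := subtree_sub_keys zR.
    rewrite /= -PPX //; rewrite Rq' in zR; exact: (allP aR).
  have vR' : v \in inorder (subtree TX q') by rewrite Rq'.
  have cR := confine sX aR' vR' H3 Ex Ey.
  have [p'' Hp''] := subtree_nest sX H1 vR'.
  rewrite Rq' in Hp'' cR.
  have sR : sorted ltn (inorder R) by rewrite -Rq'; apply: sorted_subtree.
  have uR : uniq (inorder R) by apply: sorted_uniq sR; [exact: ltn_trans | exact: ltnn].
  have le : size (inorder R) <= size (inorder H).
    apply: (uniq_leq_size uR) => z zR; apply: H4; last exact: cR.
    by rewrite -Rq' in zR; exact: subtree_sub_keys zR.
  exists q; rewrite Rq /H -Hp''; symmetry; apply: subtree_size_eq; rewrite Hp''; exact: le.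
have subT : sub T x y = H.
  case: (sub_spec x y sT) => [[_ /(_ v vT)]|[p2 [l2 [v2 [r2 [G1 G2 G3 G4]]]]]].
    by rewrite H3.
  rewrite G2.
  have v2T : v2 \in inorder T by apply: (subtree_sub_keys (p := p2)); rewrite G1 mem_node eqxx orbT.
  have v2H := dT v2 v2T G3.
  have v2q : v2 \in inorder (subtree T q) by rewrite Hq.
  have [p3 Hp3] := subtree_nest sT G1 v2q.
  rewrite Hq in Hp3.
  rewrite -Hp3; apply: subtree_size_eq; rewrite Hp3.
  apply: (uniq_leq_size uH) => z zH; apply: G4; last exact: cH.
  rewrite -Hq in zH; exact: subtree_sub_keys zH.
have Bt0 : Bt x y = Leaf.
  by rewrite /Bt /spineB filter_none //= => z zT; rewrite negb_and; case zi: (inI x y z); rewrite ?orbT // (noP z zT zi).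
change (fill B H x y = B x y).
have -> : B x y = H by rewrite /B Bt0 /= subT.
rewrite -[RHS](fill_leafs H x y); apply: fill_ext => a b Hg2.
have [Hin2 Hno2] := gap_in sH (introT allP cH) Hg2.
have Bt1 : Bt a b = Leaf.
  rewrite /Bt /spineB filter_none //= => z zT; rewrite negb_and; case zi: (inI a b z); rewrite ?orbT //.
  by rewrite (noP z zT (Hin2 z zi)).
rewrite /B Bt1 /=; apply: sub_leaf sT _ => z zT; apply/negP => zi.
by have := Hno2 z (dT z zT (Hin2 z zi)); rewrite zi.
Qed.


Lemma conv G u u' : inorder u = inorder u' ->
  exists2 c, c <= 16 * size (inorder u) & reach (fill G u None None, [::]) c (fill G u' None None, [::]).
Proof.
move=> E; have [c Hc R] := pure_conv E; exists c => //.
exact: (reach_fill G None None R).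
Qed.

Lemma bnd_ok_swap f f' P s : (forall k, k \in s -> f' k = ~~ f k) -> bnd_ok f P s -> bnd_ok f' P s.
Proof.
elim: s => [|a s IH] //=; case: s IH => [|b s] IH //= Hf.
case/bnd_ok_cons => H1 H2; rewrite /bnd_ok /=; apply/andP; split.
  rewrite !Hf ?in_cons ?eqxx ?orbT //; by case: (f a) (f b) H1 => [] [].
apply: IH => //; move=> k Hk; apply: Hf; by rewrite in_cons Hk orbT.
Qed.

Lemma main s_ T_ a_ : bst_mergesort s_ T_ a_ ->
  [/\ is_bst T_, perm_eq (inorder T_) s_ & exists2 c, c <= 48 * a_ & run T_ s_ c T_].
Proof.
elim=> [x|s1 s2 T1 T2 a1 a2 T0 a0 _ _ _ [bst1 perm1 [c1 Hc1 run1]] _ [bst2 perm2 [c2 Hc2 run2]] Hm].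
  split=> //; exists 0 => //.
  rewrite -[0]/(0 + 0); apply: run_cons; last by constructor; constructor.
  exists (Node Leaf x Leaf), [::], 0, 0; split=> //; constructor.
case: Hm => Pa [Pb [P [bstT permT [topA [topB topT]] [Prel [hang bnd]] ->]]].
set T := T0 in bstT permT topT Prel hang bnd *.
have sT : sorted ltn (inorder T) := bstT.
have uT : uniq (inorder T) by apply: sorted_uniq sT; [exact: ltn_trans | exact: ltnn].
have kT : forall k, (k \in inorder T) = (k \in inorder T1) || (k \in inorder T2).
  by move=> k; rewrite (perm_mem permT) mem_cat.
have dAB : forall k, k \in inorder T1 -> k \notin inorder T2.
  move=> k H1; have := uT; rewrite (perm_uniq permT) cat_uniq => /and3P[_ /hasPn D _].
  apply/negP => H2; have := D k H2; by rewrite H1.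
have PA : forall k, k \in inorder T1 -> P k = Pa k.
  move=> k H; rewrite Prel ?kT ?H //=; by rewrite (negPf (dAB k H)) orbF.
have PB : forall k, k \in inorder T2 -> P k = Pb k.
  move=> k H; have nA : k \notin inorder T1 by apply/negP => /dAB; rewrite H.
  by rewrite Prel ?kT ?H ?orbT //= (negPf nA).
have bA : bnd_ok (fun k => k \in inorder T1) P (inorder T).
  by case/andP: bnd => _.
have bB : bnd_ok (fun k => k \in inorder T2) P (inorder T).
  apply: bnd_ok_swap bA => k; rewrite kT; case/orP => H.
    by rewrite H (negPf (dAB k H)).
  have nA : k \notin inorder T1 by apply/negP => /dAB; rewrite H.
  by rewrite H (negPf nA).
have [B1 [u1 [E1 I1]]] : exists B u, fill B T1 None None = fill (sub T) u None None /\
    inorder u = filter P (inorder T).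
  apply: (@side T T1 T2 P Pa) => //.
  - by case/andP: topT.
  - by case/andP: topA.
  - move=> w z wA zB wz.
    have wT : w \in inorder T by rewrite kT wA.
    have zT : z \in inorder T by rewrite kT zB orbT.
    have fwz : (w \in inorder T1) != (z \in inorder T1).
      by rewrite wA; apply/negP => /eqP/esym/dAB; rewrite zB.
    have [l Hl /and4P[Pl fl wl lz]] := block1 sT bA wT zT wz fwz.
    exists l; first by move: fl; rewrite wA => /eqP.
    by rewrite Pl wl lz.
  - move=> w z wA zB zw.
    have wT : w \in inorder T by rewrite kT wA.
    have zT : z \in inorder T by rewrite kT zB orbT.
    have fwz : (w \in inorder T1) != (z \in inorder T1).
      by rewrite wA; apply/negP => /eqP/esym/dAB; rewrite zB.
    have [l Hl /and4P[Pl fl zl lw]] := block2 sT bA wT zT zw fwz.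
    exists l; first by move: fl; rewrite wA => /eqP.
    by rewrite Pl zl lw.
have [B2 [u2 [E2 I2]]] : exists B u, fill B T2 None None = fill (sub T) u None None /\
    inorder u = filter P (inorder T).
  apply: (@side T T2 T1 P Pb) => //.
  - by move=> k; rewrite kT orbC.
  - by move=> k H; apply/negP => /dAB; rewrite H.
  - by case/andP: topT.
  - by case/andP: topB.
  - by move=> s0 /hang [] H; [right|left].
  - move=> w z wA zB wz.
    have wT : w \in inorder T by rewrite kT wA orbT.
    have zT : z \in inorder T by rewrite kT zB.
    have fwz : (w \in inorder T2) != (z \in inorder T2).
      by rewrite wA; apply/negP => /eqP/esym => zA; move: (dAB z zB); rewrite zA.
    have [l Hl /and4P[Pl fl wl lz]] := block1 sT bB wT zT wz fwz.
    exists l; first by move: fl; rewrite wA => /eqP.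
    by rewrite Pl wl lz.
  - move=> w z wA zB zw.
    have wT : w \in inorder T by rewrite kT wA orbT.
    have zT : z \in inorder T by rewrite kT zB.
    have fwz : (w \in inorder T2) != (z \in inorder T2).
      by rewrite wA; apply/negP => /eqP/esym => zA; move: (dAB z zB); rewrite zA.
    have [l Hl /and4P[Pl fl zl lw]] := block2 sT bB wT zT zw fwz.
    exists l; first by move: fl; rewrite wA => /eqP.
    by rewrite Pl zl lw.
have tT : topc P T by case/andP: topT.
have D : T = fill (sub T) (cut P T) None None by apply: decomp => //; apply/allP.
have IC : inorder (cut P T) = filter P (inorder T) by apply: cut_inorder.
have [k1 Hk1 R1] := conv (sub T) (etrans IC (esym I1)).
have [k2 Hk2 R2] := conv (sub T) (etrans I1 (esym I2)).
have [k3 Hk3 R3] := conv (sub T) (etrans I2 (esym IC)).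
rewrite IC size_filter in Hk1.
rewrite I1 size_filter in Hk2.
rewrite I2 size_filter in Hk3.
rewrite -D in R1 R3.
have run1' := run_fill B1 None None run1; rewrite E1 in run1'.
have run2' := run_fill B2 None None run2; rewrite E2 in run2'.
split=> //; first by apply: (perm_trans permT); exact: perm_cat perm1 perm2.
exists (k1 + ((c1 + k2) + (c2 + k3))); first lia_c.
apply: run_pre R1 _; apply: run_cat; [exact: run_post run1' R2 | exact: run_post run2' R3].
Qed.

Theorem theorem4 :
  exists C : nat, forall (n : nat) (pi : seq nat) (T : tree) (a : nat),
    perm_eq pi (iota 1 n) -> bst_mergesort pi T a -> OPT_BST_le n pi (C * a).
Proof.
exists 48 => n pi T a Hp Hm.
have [bT pT [c Hc R]] := main Hm.
have [c' Hc' S] := run_serve R.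
exists T, c'; split; last by split=> //; exact: leq_trans Hc' Hc.
apply: (irr_sorted_eq ltn_trans ltnn) => //; first exact: iota_ltn_sorted.
by move=> z; rewrite (perm_mem pT) (perm_mem Hp).
Qed.
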